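(* If $N\le4$, then $\mathcal{SE}_2=\mathcal{SS}$: every superenergy tensor $T_{ab}\{\Omega_{[p]}\}$ of an arbitrary $p$-form $\Omega$ ($1\le p\le N$) equals the superenergy tensor of some simple form.
   Context: Lorentzian metric $g_{ab}$ of signature $(+,-,\dots,-)$ in dimension $N$ with a time orientation. Superenergy tensor of a $p$-form ($1\le p\le N$): $T_{ab}\{\Omega_{[p]}\}=\frac{(-1)^{p-1}}{(p-1)!}[\Omega_{a a_2\dots a_p}\Omega_b{}^{a_2\dots a_p}-\frac{1}{2p}(\Omega\cdot\Omega)g_{ab}]$, $\Omega\cdot\Omega$ full contraction (for an $N$-form $f\eta$ it is $\tfrac12f^2g_{ab}$). $\mathcal{SE}_2$ is the set of all such tensors for arbitrary $p$-forms; $\mathcal{SS}\subset\mathcal{SE}_2$ is the subset arising from simple $p$-forms (wedge products of $p$ linearly independent 1-forms). *)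

(* Defs.v *)
From HB Require Import structures.
From mathcomp Require Import all_boot all_order all_algebra all_fingroup.
From mathcomp Require Import all_classical all_reals.
Set Implicit Arguments. Unset Strict Implicit. Unset Printing Implicit Defensive.
Import Order.TTheory GRing.Theory Num.Theory.
Local Open Scope ring_scope.

Definition idx (N p : nat) := {ffun 'I_p -> 'I_N}.

Definition minkowski (R : realType) (N : nat) : 'M[R]_N :=
  \matrix_(i, j) (if i == j then (if val i == 0%N then 1 else -1) else 0).

(* A Lorentzian metric of signature (+,-,...,-) (components in some basis):
   congruent to the Minkowski metric. *)
Definition lorentzian (R : realType) (N : nat) (g : 'M[R]_N) : Prop :=
  exists P : 'M[R]_N, P \in unitmx /\ g = P^T *m minkowski R N *m P.

Definition is_pform (R : realType) (N p : nat) (Om : idx N p -> R) : Prop :=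
  forall (s : 'S_p) (i : idx N p),
    Om [ffun k => i (s k)] = (-1) ^+ (odd_perm s) * Om i.

Definition consI (N q : nat) (a : 'I_N) (i : idx N q) : idx N q.+1 :=
  [ffun k : 'I_q.+1 => match unlift ord0 k with Some k' => i k' | None => a end].

Definition fullcontr (R : realType) (N p : nat) (g : 'M[R]_N) (Om : idx N p -> R) : R :=
  \sum_(i : idx N p) \sum_(j : idx N p)
     Om i * Om j * \prod_(k < p) invmx g (i k) (j k).

(* Superenergy tensor of a p-form, p = q.+1:
   T_ab = (-1)^(p-1)/(p-1)! [ Omega_{a a2..ap} Omega_b^{a2..ap}
                              - 1/(2p) (Omega.Omega) g_ab ]. *)
Definition superenergy (R : realType) (N q : nat) (g : 'M[R]_N)
    (Om : idx N q.+1 -> R) : 'M[R]_N :=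
  \matrix_(a, b)
    ((-1) ^+ q / (q`!)%:R *
     (\sum_(i : idx N q) \sum_(j : idx N q)
         Om (consI a i) * Om (consI b j) * \prod_(k < q) invmx g (i k) (j k)
      - (2 * (q.+1)%:R)^-1 * fullcontr g Om * g a b)).

(* The wedge product omega_1 /\ ... /\ omega_p of the 1-forms given by the
   rows of W : (omega_1 ^ ... ^ omega_p)_{a_1..a_p} = det [omega_k(a_l)]. *)
Definition wedge (R : realType) (N p : nat) (W : 'M[R]_(p, N)) (i : idx N p) : R :=
  \det (\matrix_(k, l) W k (i l)).

(* Main.v *)
Require Import Defs.
From HB Require Import structures.
From mathcomp Require Import all_boot all_order all_algebra all_fingroup.
From mathcomp Require Import all_classical all_reals.
From mathcomp Require Import ring lra zify.
Import Order.TTheory GRing.Theory Num.Theory.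
Local Open Scope ring_scope.
Set Implicit Arguments. Unset Strict Implicit.

Ltac ordnorm1 := match goal with |- context [?t] =>
  lazymatch type of t with ordinal ?n =>
    lazymatch t with @Ordinal _ _ (@erefl bool true) => fail | _ =>
     let v := eval vm_compute in (nat_of_ord t) in
     lazymatch v with context [nat_of_ord _] => fail | _ =>
     rewrite (_ : t = @Ordinal n v (erefl true)); [| by apply/val_inj] end end end end.
Ltac ordnorm := repeat ordnorm1.

Notation "[o k / n ]" := (@Ordinal n k (erefl true)) (at level 0, k at level 0, n at level 0).

Lemma det2 (R : comNzRingType) (A : 'M[R]_2) :
  \det A = A [o 0 / 2] [o 0 / 2] * A [o 1 / 2] [o 1 / 2] - A [o 0 / 2] [o 1 / 2] * A [o 1 / 2] [o 0 / 2].
Proof.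
rewrite (expand_det_row _ ord0) !big_ord_recl big_ord0 /cofactor !det_mx11 !mxE /=.
ordnorm; rewrite /bump /=; ring.
Qed.

Lemma det3 (R : comNzRingType) (A : 'M[R]_3) :
  \det A = A [o 0 / 3] [o 0 / 3] * (A [o 1 / 3] [o 1 / 3] * A [o 2 / 3] [o 2 / 3] - A [o 1 / 3] [o 2 / 3] * A [o 2 / 3] [o 1 / 3])
         - A [o 0 / 3] [o 1 / 3] * (A [o 1 / 3] [o 0 / 3] * A [o 2 / 3] [o 2 / 3] - A [o 1 / 3] [o 2 / 3] * A [o 2 / 3] [o 0 / 3])
         + A [o 0 / 3] [o 2 / 3] * (A [o 1 / 3] [o 0 / 3] * A [o 2 / 3] [o 1 / 3] - A [o 1 / 3] [o 1 / 3] * A [o 2 / 3] [o 0 / 3]).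
Proof.
rewrite (expand_det_row _ ord0) !big_ord_recl big_ord0 /cofactor !det2 !mxE /=.
ordnorm; rewrite /bump /=; ring.
Qed.


Section PF.
Variable R : realType.
Variables N p : nat.

Lemma pform_vanish (f : idx N p -> R) : is_pform f ->
  forall (i : idx N p) (k1 k2 : 'I_p), k1 != k2 -> i k1 = i k2 -> f i = 0.
Proof.
move=> hf i k1 k2 hk hi.
have := hf (tperm k1 k2) i; rewrite odd_tperm hk expr1 mulN1r.
have -> : [ffun k => i (tperm k1 k2 k)] = i.
  apply/ffunP => k; rewrite ffunE; case: tpermP => // ->; by [].
move=> h; lra.
Qed.

Lemma wedge_pform (W : 'M[R]_(p, N)) : is_pform (wedge W).
Proof.
move=> s i; rewrite /wedge.
have -> : (\matrix_(k, l) W k ([ffun k0 => i (s k0)] l)) = col_perm s (\matrix_(k, l) W k (i l)).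
  by apply/matrixP => k l; rewrite !mxE ffunE.
by rewrite col_permE det_mulmx det_perm odd_permV mulrC.
Qed.

Lemma pform_eq (f h : idx N p -> R) : is_pform f -> is_pform h ->
  (forall i : idx N p, (forall k1 k2 : 'I_p, (k1 < k2)%N -> (i k1 < i k2)%N) -> f i = h i) ->
  forall i, f i = h i.
Proof.
move=> hf hh hinc i.
case: (pickP (fun q : 'I_p * 'I_p => (q.1 != q.2) && (i q.1 == i q.2))) => [[k1 k2] /andP[hk /eqP hi] | H].
  by rewrite (pform_vanish hf hk hi) (pform_vanish hh hk hi).
have inj : injective i.
  move=> k1 k2 e; have := H (k1, k2); rewrite /= e eqxx andbT; by move/negbFE/eqP.
pose t := [tuple i k | k < p].
pose le := fun a b : 'I_N => (val a <= val b)%N.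
have tot : total le by move=> a b; exact: leq_total.
pose st := Tuple (sort_tupleP le t).
have [s hs] : exists s : 'S_p, (st : seq _) = [tuple tnth t (s k) | k < p].
  by apply/tuple_permP; rewrite /= perm_sort.
pose j : idx N p := [ffun k => i (s k)].
have hj : forall k, j k = tnth st k.
  move=> k; rewrite (tnth_nth (i k)) hs -tnth_nth tnth_map tnth_ord_tuple ffunE tnth_map tnth_ord_tuple //.
have jinc : forall k1 k2 : 'I_p, (k1 < k2)%N -> (j k1 < j k2)%N.
  move=> k1 k2 hk; rewrite ltn_neqAle; apply/andP; split.
    rewrite !ffunE; apply/eqP => /val_inj /inj /perm_inj e.
    by move: hk; rewrite e ltnn.
  rewrite !hj !(tnth_nth (i k1)).
  have so : sorted le st by exact: sort_sorted.
  apply: (sorted_ltn_nth _ _ so) => //.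
  - by move=> x y z; exact: leq_trans.
  - by rewrite inE size_tuple.
  - by rewrite inE size_tuple.
have ij : i = [ffun k => j ((s^-1)%g k)].
  by apply/ffunP => k; rewrite !ffunE permKV.
by rewrite ij hf hh (hinc _ jinc).
Qed.
End PF.

Section Q1.
Variable R : realType.
Variable N : nat.

Definition pair (a b : 'I_N) : idx N 2 := [ffun k : 'I_2 => if k == ord0 then a else b].
Definition mat (f : idx N 2 -> R) : 'M[R]_N := \matrix_(a, b) f (pair a b).
Definition SEG (g G M : 'M[R]_N) : 'M[R]_N :=
  ((2 * 2%:R)^-1 * \tr (M *m G *m M^T *m G^T)) *: g - M *m G *m M^T.

Lemma sum_idx1 (F : idx N 1 -> R) : \sum_i F i = \sum_c F [ffun _ => c].
Proof.
rewrite (reindex (fun c : 'I_N => [ffun _ : 'I_1 => c])) //.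
exists (fun i : idx N 1 => i ord0) => [c _|i _]; first by rewrite ffunE.
by apply/ffunP => k; rewrite ffunE (ord1 k).
Qed.

Lemma pair_eta (i : idx N 2) : i = pair (i ord0) (i [o 1 / 2]).
Proof.
apply/ffunP => k; rewrite ffunE; case: k => [[|[|//]]] Hk /=.
  by congr (i _); apply/val_inj.
by congr (i _); apply/val_inj.
Qed.

Lemma sum_idx2 (F : idx N 2 -> R) : \sum_i F i = \sum_a \sum_b F (pair a b).
Proof.
rewrite pair_bigA /= (reindex (fun p : 'I_N * 'I_N => pair p.1 p.2)) //.
exists (fun i : idx N 2 => (i ord0, i [o 1 / 2])) => [[a b] _|i _] /=; last by rewrite -pair_eta.
by rewrite !ffunE.
Qed.

Lemma consI_pair a c : consI a [ffun _ : 'I_1 => c] = pair a c.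
Proof.
apply/ffunP => k; rewrite !ffunE; case: k => [[|[|//]]] Hk /=.
  by rewrite (_ : Ordinal Hk = ord0) ?unlift_none //; apply/val_inj.
rewrite (_ : Ordinal Hk = lift ord0 ord0); last by apply/val_inj.
by rewrite liftK ffunE.
Qed.

Lemma pair0 a b : pair a b ord0 = a. Proof. by rewrite ffunE. Qed.
Lemma pair1 a b : pair a b (lift ord0 ord0) = b. Proof. by rewrite ffunE. Qed.

Lemma se1 (g : 'M[R]_N) (f : idx N 2 -> R) :
  superenergy g f = SEG g (invmx g) (mat f).
Proof.
apply/matrixP => a b; rewrite !mxE sum_idx1; under eq_bigr do rewrite sum_idx1.
rewrite /fullcontr sum_idx2.
have E1 : \sum_i \sum_c f (consI (q:=1) a [ffun=> i]) * f (consI (q:=1) b [ffun=> c]) *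
         \prod_(k < 1) invmx g ([ffun=> i] k) ([ffun=> c] k) =
     \sum_j (mat f *m invmx g) a j * (mat f)^T j b.
  under eq_bigr do under eq_bigr do rewrite !consI_pair big_ord1 !ffunE.
  rewrite exchange_big; apply eq_bigr => j _; rewrite !mxE big_distrl /=.
  by apply eq_bigr => k _; rewrite !mxE; ring.
have E2 : \sum_a0 \sum_b0 \sum_j f (pair a0 b0) * f j * \prod_(k < 2) invmx g (pair a0 b0 k) (j k)
   = \tr (mat f *m invmx g *m (mat f)^T *m (invmx g)^T).
  under eq_bigr do under eq_bigr do rewrite sum_idx2.
  rewrite /mxtrace; apply eq_bigr => x _; rewrite mxE.
  under [RHS]eq_bigr do rewrite !mxE big_distrl /=.
  under [RHS]eq_bigr do under eq_bigr do rewrite !mxE big_distrl big_distrl /=.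
  under [RHS]eq_bigr do rewrite exchange_big /=.
  rewrite [RHS]exchange_big /=; apply eq_bigr => w _.
  apply eq_bigr => y _; apply eq_bigr => z _.
  by rewrite big_ord_recl big_ord1 !pair0 !pair1 !mxE; ring.
rewrite E1 E2 /= expr1 divr1; ring.
Qed.

Lemma SEG_cov (P G M eta : 'M[R]_N) : P \in unitmx -> eta *m eta = 1%:M ->
  (P^T *m eta *m P) *m G = 1%:M ->
  SEG (P^T *m eta *m P) G M = P^T *m SEG eta eta ((invmx P)^T *m M *m invmx P) *m P.
Proof.
move=> Pu ee h.
set Q := invmx P.
have PQ : P *m Q = 1%:M by rewrite mulmxV.
have QP : Q *m P = 1%:M by rewrite mulVmx.
have PG1 : P *m G = eta *m Q^T.
  have := congr1 (mulmx (eta *m Q^T)) h.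
  rewrite mulmx1 !mulmxA => <-.
  by rewrite -(mulmxA eta) -trmx_mul PQ trmx1 mulmx1 ee mul1mx.
have PG : P *m G *m P^T = eta by rewrite PG1 -mulmxA -trmx_mul PQ trmx1 mulmx1.
have PG' : P *m G^T *m P^T = eta^T by rewrite -PG !trmx_mul trmxK mulmxA.
set X := Q^T *m M *m Q.
have MX : M = P^T *m X *m P.
  by rewrite /X !mulmxA -trmx_mul QP trmx1 mul1mx -mulmxA QP mulmx1.
have E1 : M *m G *m M^T = P^T *m (X *m eta *m X^T) *m P.
  by rewrite {1 2}MX !trmx_mul !trmxK !mulmxA -PG !mulmxA.
have E2 : \tr (M *m G *m M^T *m G^T) = \tr (X *m eta *m X^T *m eta^T).
  by rewrite E1 -!mulmxA mxtrace_mulC !mulmxA -PG' !mulmxA.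
rewrite /SEG E2 E1 mulmxBr mulmxBl; congr (_ - _).
by rewrite -scalemxAr -scalemxAl.
Qed.

Definition J2 : 'M[R]_2 := \matrix_(i, j) (if (val i == 0%N) && (val j == 1%N) then 1
   else if (val i == 1%N) && (val j == 0%N) then -1 else 0).

Lemma mat_wedge (W : 'M[R]_(2, N)) : mat (wedge W) = W^T *m J2 *m W.
Proof.
apply/matrixP => c d; rewrite !mxE /wedge det2 !mxE.
rewrite !big_ord_recl !big_ord0 !mxE !big_ord_recl !big_ord0 !mxE /=.
ordnorm; rewrite !ffunE /=; ring.
Qed.

Lemma sum_delta (F : 'I_N -> R) (b : 'I_N) : \sum_l F l * (l == b)%:R = F b.
Proof.
rewrite (bigD1 b) //= eqxx mulr1 big1 ?addr0 // => l /negbTE ->; by rewrite mulr0.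
Qed.

Lemma fact_gen (Y : 'M[R]_N) (a b : 'I_N) : Y a b != 0 -> (forall i, Y i i = 0) ->
  Y b a = - Y a b -> (forall c d, Y a c * Y b d - Y a d * Y b c = Y a b * Y c d) ->
  exists W : 'M[R]_(2, N), row_free W /\ W^T *m J2 *m W = Y.
Proof.
move=> Hab Hd Hba Hp.
pose W : 'M[R]_(2, N) := \matrix_(k < 2, l < N) if val k == 0%N then Y a l / Y a b else Y b l.
exists W; split.
  apply/row_freeP.
  exists (\matrix_(l < N, k < 2) if val k == 0%N then (l == b)%:R else (l == a)%:R / Y b a).
  have Hba0 : Y b a != 0 by rewrite Hba oppr_eq0.
  apply/matrixP => k k'; rewrite !mxE.
  case: k => [[|[|//]] Hk]; case: k' => [[|[|//]] Hk'] /=.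
  - by under eq_bigr do rewrite !mxE /=; rewrite sum_delta divff.
  - under eq_bigr do rewrite !mxE /= mulrA; rewrite -big_distrl /= sum_delta Hd; by rewrite !mul0r.
  - by under eq_bigr do rewrite !mxE /=; rewrite sum_delta Hd.
  - by under eq_bigr do rewrite !mxE /= mulrA; rewrite -big_distrl /= sum_delta mulfV.
apply/matrixP => c d; rewrite !mxE !big_ord_recl !big_ord0 !mxE !big_ord_recl !big_ord0 !mxE /=.
rewrite -[Y c d](mulKf Hab) -Hp; field; exact: Hab.
Qed.

Lemma mx_nz (Y : 'M[R]_N) : Y != 0 -> exists a b, Y a b != 0.
Proof.
move=> HY; case: (pickP (fun p : 'I_N * 'I_N => Y p.1 p.2 != 0)) => [[a0 b0] H | H].
  by exists a0, b0.
case/eqP: HY; apply/matrixP => i j; have := H (i, j); rewrite mxE /=.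
by move/negbFE/eqP.
Qed.

Lemma anti_ji (X : 'M[R]_N) : X^T = - X -> forall i j, X j i = - X i j.
Proof. by move=> h i j; move/matrixP: h => /(_ i j); rewrite !mxE. Qed.

Lemma anti_ii (X : 'M[R]_N) : X^T = - X -> forall i, X i i = 0.
Proof. move=> h i; have := anti_ji h i i; lra. Qed.

Lemma mat_anti (f : idx N 2 -> R) : is_pform f -> (mat f)^T = - mat f.
Proof.
move=> hf; apply/matrixP => a b; rewrite !mxE.
have := hf (tperm ord0 (lift ord0 ord0)) (pair a b).
rewrite odd_tperm /= expr1 mulN1r => <-; congr f.
apply/ffunP => k; rewrite !ffunE; case: k => [[|[|//]] Hk] /=.
  by rewrite (_ : Ordinal Hk = ord0) ?tpermL //; apply/val_inj.
by rewrite (_ : Ordinal Hk = lift ord0 ord0) ?tpermR //; apply/val_inj.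
Qed.

Lemma mat_nz (f : idx N 2 -> R) : (exists i, f i <> 0) -> mat f != 0.
Proof.
case=> i hi; apply/eqP => /matrixP /(_ (i ord0) (i [o 1/2])); rewrite !mxE -pair_eta.
exact: hi.
Qed.

End Q1.

Section Mink.
Variable R : realType.
Local Notation eta := (minkowski R 4).

Definition fF (e1 e2 e3 b1 b2 b3 : R) (i j : nat) : R :=
  match i, j with
  | 0, 1 => e1 | 0, 2 => e2 | 0, 3 => e3
  | 1, 0 => - e1 | 2, 0 => - e2 | 3, 0 => - e3
  | 2, 3 => b1 | 3, 2 => - b1 | 3, 1 => b2 | 1, 3 => - b2
  | 1, 2 => b3 | 2, 1 => - b3 | _, _ => 0 end.
Definition mkF e1 e2 e3 b1 b2 b3 : 'M[R]_4 := \matrix_(i, j) fF e1 e2 e3 b1 b2 b3 i j.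


Lemma two2 : (2 * 2 : R) != 0. Proof. by rewrite mulf_neq0 // pnatr_eq0. Qed.

Lemma sum4 (F : 'I_4 -> R) : \sum_k F k = F [o 0/4] + F [o 1/4] + F [o 2/4] + F [o 3/4].
Proof. rewrite !big_ord_recl big_ord0 addr0 !addrA; ordnorm; done. Qed.

Definition Sf e1 e2 e3 b1 b2 b3 : 'M[R]_4 := \matrix_(i, j)
  (let f := fF e1 e2 e3 b1 b2 b3 in
  f i 0%N * f j 0%N - f i 1%N * f j 1%N - f i 2%N * f j 2%N - f i 3%N * f j 3%N).

Lemma Smk e1 e2 e3 b1 b2 b3 :
  mkF e1 e2 e3 b1 b2 b3 *m eta *m (mkF e1 e2 e3 b1 b2 b3)^T = Sf e1 e2 e3 b1 b2 b3.
Proof.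
apply/matrixP => i j; rewrite !mxE sum4 !mxE !sum4 !mxE /=. ring.
Qed.

Lemma trmk e1 e2 e3 b1 b2 b3 :
  \tr (mkF e1 e2 e3 b1 b2 b3 *m eta *m (mkF e1 e2 e3 b1 b2 b3)^T *m eta^T) =
  2 * (b1^+2 + b2^+2 + b3^+2 - e1^+2 - e2^+2 - e3^+2).
Proof.
rewrite Smk /mxtrace sum4 !mxE !sum4 !mxE /=. ring.
Qed.

Lemma rotSE e1 e2 e3 b1 b2 b3 a c :
  SEG eta eta (mkF (a*e1 + c*b1) (a*e2 + c*b2) (a*e3 + c*b3) (a*b1 - c*e1) (a*b2 - c*e2) (a*b3 - c*e3))
  = (a^+2 + c^+2) *: SEG eta eta (mkF e1 e2 e3 b1 b2 b3).
Proof.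
rewrite /SEG !trmk !Smk; apply/matrixP => i j; rewrite !mxE.
case: i => [[|[|[|[|//]]]] Hi]; case: j => [[|[|[|[|//]]]] Hj] /=; by field.
Qed.

Lemma plucker e1 e2 e3 b1 b2 b3 (a b c d : 'I_4) : e1*b1 + e2*b2 + e3*b3 = 0 ->
  let Y := mkF e1 e2 e3 b1 b2 b3 in
  Y a c * Y b d - Y a d * Y b c = Y a b * Y c d.
Proof.
move=> pl /=; rewrite !mxE.
case: a => [[|[|[|[|//]]]] Ha]; case: b => [[|[|[|[|//]]]] Hb];
case: c => [[|[|[|[|//]]]] Hc]; case: d => [[|[|[|[|//]]]] Hd] /=;
  first [ring | lra].
Qed.

Lemma rot_choice (A C : R) : exists a c : R, a^+2 + c^+2 = 1 /\ (a^+2 - c^+2) * C - a * c * A = 0.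
Proof.
case: (C =P 0) => HC.
  by exists 1, 0; rewrite HC; split; ring.
pose rho := Num.sqrt (A^+2 + 4 * C^+2).
have hr : rho ^+ 2 = A^+2 + 4 * C^+2.
  by rewrite sqr_sqrtr // addr_ge0 ?sqr_ge0 // mulr_ge0 ?sqr_ge0.
pose al := A + rho; pose be := 2 * C.
pose s := Num.sqrt (al^+2 + be^+2).
have hbe : be != 0 by rewrite mulf_neq0 // ?pnatr_eq0 //; apply/eqP.
have hpos : 0 < al^+2 + be^+2.
  by rewrite ltr_wpDl ?sqr_ge0 // lt_def sqrf_eq0 hbe sqr_ge0.
have hs : s ^+ 2 = al^+2 + be^+2 by rewrite sqr_sqrtr // ltW.
have hs0 : s != 0.
  by apply/eqP => h; move: hs; rewrite h expr0n /= => /esym/eqP; rewrite (gt_eqF hpos).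
exists (al / s), (be / s); split.
  by rewrite !expr_div_n -mulrDl -hs divff // sqrf_eq0.
have key : (al^+2 - be^+2) * C - al * be * A = 0.
  rewrite (_ : _ - _ = C * (rho^+2 - (A^+2 + 4 * C^+2))); first by rewrite hr subrr mulr0.
  rewrite /al /be; ring.
rewrite (_ : _ - _ = ((al^+2 - be^+2) * C - al * be * A) / s^+2); last by field.
by rewrite key mul0r.
Qed.

Lemma comp0 (a c x y : R) : a^+2 + c^+2 = 1 -> a*x + c*y = 0 -> a*y - c*x = 0 -> x = 0 /\ y = 0.
Proof.
move=> h h1 h2.
have ex : x = a*(a*x+c*y) - c*(a*y-c*x) by rewrite -[x in LHS]mulr1 -h; ring.
have ey : y = a*(a*y-c*x) + c*(a*x+c*y) by rewrite -[y in LHS]mulr1 -h; ring.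
by split; [rewrite ex h1 h2 | rewrite ey h1 h2]; ring.
Qed.

Lemma mink_mk e1 e2 e3 b1 b2 b3 : mkF e1 e2 e3 b1 b2 b3 != 0 ->
  exists W : 'M[R]_(2, 4), row_free W /\
     SEG eta eta (W^T *m J2 R *m W) = SEG eta eta (mkF e1 e2 e3 b1 b2 b3).
Proof.
move=> HX.
have [a [c [hac hpl]]] := rot_choice (e1^+2 + e2^+2 + e3^+2 - (b1^+2 + b2^+2 + b3^+2))
   (e1*b1 + e2*b2 + e3*b3).
pose Y := mkF (a*e1 + c*b1) (a*e2 + c*b2) (a*e3 + c*b3) (a*b1 - c*e1) (a*b2 - c*e2) (a*b3 - c*e3).
have hY : SEG eta eta Y = SEG eta eta (mkF e1 e2 e3 b1 b2 b3) by rewrite /Y rotSE hac scale1r.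
have hplY : (a*e1 + c*b1) * (a*b1 - c*e1) + (a*e2 + c*b2) * (a*b2 - c*e2) + (a*e3 + c*b3) * (a*b3 - c*e3) = 0.
  by rewrite -hpl; ring.
have HY : Y != 0.
  apply/eqP => HY; move/eqP: HX; apply.
  have z i j : Y i j = 0 by rewrite HY mxE.
  have z1 := z [o 0/4] [o 1/4]; have z2 := z [o 0/4] [o 2/4]; have z3 := z [o 0/4] [o 3/4].
  have z4 := z [o 2/4] [o 3/4]; have z5 := z [o 3/4] [o 1/4]; have z6 := z [o 1/4] [o 2/4].
  rewrite !mxE /= in z1 z2 z3 z4 z5 z6.
  have [-> ->] := comp0 hac z1 z4; have [-> ->] := comp0 hac z2 z5; have [-> ->] := comp0 hac z3 z6.
  apply/matrixP => i j; rewrite !mxE.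
  by case: i => [[|[|[|[|//]]]] Hi]; case: j => [[|[|[|[|//]]]] Hj] /=; rewrite ?oppr0.
have [a0 [b0 Hab]] := mx_nz HY.
have [W [HW HWY]] : exists W : 'M[R]_(2, 4), row_free W /\ W^T *m J2 R *m W = Y.
  apply: (fact_gen Hab).
  - by move=> i; rewrite /Y mxE; case: i => [[|[|[|[|//]]]] Hi].
  - rewrite /Y !mxE.
    by case: a0 {Hab} => [[|[|[|[|//]]]] Ha]; case: b0 => [[|[|[|[|//]]]] Hb] /=; rewrite ?opprK ?oppr0.
  - by move=> c0 d0; apply: plucker.
by exists W; rewrite HWY hY.
Qed.

Lemma mkF_of (X : 'M[R]_4) : X^T = - X ->
  X = mkF (X [o 0/4] [o 1/4]) (X [o 0/4] [o 2/4]) (X [o 0/4] [o 3/4])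
          (X [o 2/4] [o 3/4]) (X [o 3/4] [o 1/4]) (X [o 1/4] [o 2/4]).
Proof.
move=> h; apply/matrixP => i j; rewrite mxE.
case: i => [[|[|[|[|//]]]] Hi]; case: j => [[|[|[|[|//]]]] Hj] /=; ordnorm;
  first [by rewrite anti_ii | by rewrite (anti_ji h) | done].
Qed.
End Mink.

Section N4.
Variable R : realType.
Local Notation eta := (minkowski R 4).

Lemma eta2 : eta *m eta = 1%:M.
Proof.
apply/matrixP => i j; rewrite !mxE sum4 !mxE.
by case: i => [[|[|[|[|//]]]] Hi]; case: j => [[|[|[|[|//]]]] Hj] /=; ring.
Qed.

Lemma q1_N4 (g : 'M[R]_4) (Om : idx 4 2 -> R) : lorentzian g -> is_pform Om ->
  (exists i, Om i <> 0) ->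
  exists W : 'M[R]_(2, 4), row_free W /\ superenergy g Om = superenergy g (wedge W).
Proof.
case=> P [Pu gE] hf hnz.
have etau : eta \in unitmx by case: (mulmx1_unit eta2).
have gu : g \in unitmx by rewrite gE !unitmx_mul unitmx_tr Pu etau.
have gG : (P^T *m eta *m P) *m invmx (P^T *m eta *m P) = 1%:M by rewrite -gE mulmxV.
pose X := (invmx P)^T *m mat Om *m invmx P.
have Xa : X^T = - X.
  by rewrite /X !trmx_mul trmxK mat_anti // mulNmx mulmxN mulmxA.
have MX : mat Om = P^T *m X *m P.
  by rewrite /X !mulmxA -trmx_mul mulVmx // trmx1 mul1mx -mulmxA mulVmx // mulmx1.
have Xnz : X != 0.
  apply/eqP => X0; move: (mat_nz hnz); by rewrite MX X0 mulmx0 mul0mx eqxx.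
rewrite {1}(mkF_of Xa) in Xnz.
have [Wt [HWt HSE]] := mink_mk Xnz.
rewrite -(mkF_of Xa) in HSE.
exists (Wt *m P); split.
  by rewrite /row_free mxrankMfree ?row_free_unit.
have E : (invmx P)^T *m ((Wt *m P)^T *m J2 R *m (Wt *m P)) *m invmx P = Wt^T *m J2 R *m Wt.
  by rewrite !trmx_mul !mulmxA -trmx_mul mulmxV // trmx1 mul1mx -!mulmxA mulmxV // mulmx1.
rewrite !se1 mat_wedge gE.
rewrite !(@SEG_cov R 4 P _ _ eta Pu eta2 gG).
by rewrite E HSE -/X.
Qed.
End N4.

Section Small.
Variable R : realType.

Lemma q1_fact N (g : 'M[R]_N) (Om : idx N 2 -> R) : is_pform Om -> (exists i, Om i <> 0) ->
  (forall a b c d, mat Om a c * mat Om b d - mat Om a d * mat Om b c = mat Om a b * mat Om c d) ->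
  exists W : 'M[R]_(2, N), row_free W /\ superenergy g Om = superenergy g (wedge W).
Proof.
move=> hf hnz hp.
have [a [b hab]] := mx_nz (mat_nz hnz).
have ha := mat_anti hf.
have [W [HW HWY]] := fact_gen hab (anti_ii ha) (anti_ji ha a b) (hp a b).
by exists W; split => //; rewrite !se1 mat_wedge HWY.
Qed.

Definition f3 (x y z : R) (i j : nat) : R :=
  match i, j with
  | 0, 1 => x | 1, 0 => - x | 0, 2 => y | 2, 0 => - y | 1, 2 => z | 2, 1 => - z | _, _ => 0 end.

Lemma pl3 (Y : 'M[R]_3) : Y^T = - Y ->
  forall a b c d, Y a c * Y b d - Y a d * Y b c = Y a b * Y c d.
Proof.
move=> h.
have -> : Y = \matrix_(i, j) f3 (Y [o 0/3] [o 1/3]) (Y [o 0/3] [o 2/3]) (Y [o 1/3] [o 2/3]) i j.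
  apply/matrixP => i j; rewrite mxE.
  case: i => [[|[|[|//]]] Hi]; case: j => [[|[|[|//]]] Hj] /=; ordnorm;
    first [by rewrite anti_ii | by rewrite (anti_ji h) | done].
move=> a b c d; rewrite !mxE.
case: a => [[|[|[|//]]] Ha]; case: b => [[|[|[|//]]] Hb];
case: c => [[|[|[|//]]] Hc]; case: d => [[|[|[|//]]] Hd] /=; ring.
Qed.

Lemma pl2 (Y : 'M[R]_2) : Y^T = - Y ->
  forall a b c d, Y a c * Y b d - Y a d * Y b c = Y a b * Y c d.
Proof.
move=> h.
have -> : Y = \matrix_(i, j) f3 (Y [o 0/2] [o 1/2]) 0 0 i j.
  apply/matrixP => i j; rewrite mxE.
  case: i => [[|[|//]] Hi]; case: j => [[|[|//]] Hj] /=; ordnorm;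
    first [by rewrite anti_ii | by rewrite (anti_ji h) | done].
move=> a b c d; rewrite !mxE.
case: a => [[|[|//]] Ha]; case: b => [[|[|//]] Hb];
case: c => [[|[|//]] Hc]; case: d => [[|[|//]] Hd] /=; ring.
Qed.
End Small.

Section Forms.
Variable R : realType.

Lemma q0_case N (Om : idx N 1 -> R) : (exists i, Om i <> 0) ->
  exists W : 'M[R]_(1, N), row_free W /\ Om = wedge W.
Proof.
case=> i hi.
pose W : 'M[R]_(1, N) := \matrix_(k < 1, l < N) Om [ffun _ => l].
have E : Om = wedge W.
  apply: boolp.funext => j; rewrite /wedge det_mx11 !mxE; congr Om.
  by apply/ffunP => k; rewrite ffunE (ord1 k).
exists W; split => //.
have W0 : W != 0.
  apply/eqP => /matrixP /(_ ord0 (i ord0)); rewrite !mxE => h; apply: hi; rewrite -h.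
  by congr Om; apply/ffunP => k; rewrite ffunE (ord1 k).
rewrite /row_free eqn_leq rank_leq_row /= lt0n mxrank_eq0 //.
Qed.

Definition trip N (x y z : 'I_N) : idx N 3 :=
  [ffun k : 'I_3 => if val k == 0%N then x else if val k == 1%N then y else z].

Lemma trip_eta N (i : idx N 3) : i = trip (i [o 0/3]) (i [o 1/3]) (i [o 2/3]).
Proof.
apply/ffunP => k; rewrite ffunE.
by case: k => [[|[|[|//]]] Hk] /=; congr (i _); apply/val_inj.
Qed.

Lemma incr3_4 (P : idx 4 3 -> Prop) :
  P (trip [o 0/4] [o 1/4] [o 2/4]) -> P (trip [o 0/4] [o 1/4] [o 3/4]) ->
  P (trip [o 0/4] [o 2/4] [o 3/4]) -> P (trip [o 1/4] [o 2/4] [o 3/4]) ->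
  forall i : idx 4 3, (forall k1 k2 : 'I_3, (k1 < k2)%N -> (i k1 < i k2)%N) -> P i.
Proof.
move=> p1 p2 p3 p4 i hi.
have h1 := hi [o 0/3] [o 1/3] isT; have h2 := hi [o 1/3] [o 2/3] isT.
rewrite (trip_eta i); move: (i [o 0/3]) (i [o 1/3]) (i [o 2/3]) h1 h2 => x y z.
case: x => [[|[|[|[|//]]]] Hx]; case: y => [[|[|[|[|//]]]] Hy]; case: z => [[|[|[|[|//]]]] Hz] //= _ _;
  ordnorm; done.
Qed.

Lemma incr3_3 (P : idx 3 3 -> Prop) :
  P (trip [o 0/3] [o 1/3] [o 2/3]) ->
  forall i : idx 3 3, (forall k1 k2 : 'I_3, (k1 < k2)%N -> (i k1 < i k2)%N) -> P i.
Proof.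
move=> p1 i hi.
have h1 := hi [o 0/3] [o 1/3] isT; have h2 := hi [o 1/3] [o 2/3] isT.
rewrite (trip_eta i); move: (i [o 0/3]) (i [o 1/3]) (i [o 2/3]) h1 h2 => x y z.
case: x => [[|[|[|//]]] Hx]; case: y => [[|[|[|//]]] Hy]; case: z => [[|[|[|//]]] Hz] //= _ _;
  ordnorm; done.
Qed.

End Forms.

Section Three.
Variable R : realType.

Definition W3 (a b c d : nat) (al be ga w : R) : 'M[R]_(3, 4) := \matrix_(k, l)
  match val k with
  | 0 => (val l == a)%:R + al * (val l == d)%:R
  | 1 => (val l == b)%:R + be * (val l == d)%:R
  | _ => w * (val l == c)%:R + ga * (val l == d)%:R end.

Definition Z3 (a b c : nat) (w : R) : 'M[R]_(4, 3) := \matrix_(l, k)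
  match val k with
  | 0 => (val l == a)%:R | 1 => (val l == b)%:R | _ => (val l == c)%:R / w end.

Ltac w3free Z := apply/row_freeP; exists Z; apply/matrixP;
  case=> [[|[|[|//]]] ?]; case=> [[|[|[|//]]] ?]; rewrite !mxE sum4 !mxE /=; field.

Ltac w3val := rewrite /wedge det3 !mxE !ffunE /=; field.

Lemma q2_N4 (Om : idx 4 3 -> R) : is_pform Om -> (exists i, Om i <> 0) ->
  exists W : 'M[R]_(3, 4), row_free W /\ Om = wedge W.
Proof.
move=> hf hnz.
set D := Om (trip [o 0/4] [o 1/4] [o 2/4]).
set C := Om (trip [o 0/4] [o 1/4] [o 3/4]).
set B := Om (trip [o 0/4] [o 2/4] [o 3/4]).
set A := Om (trip [o 1/4] [o 2/4] [o 3/4]).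
have key : forall W : 'M[R]_(3, 4),
   wedge W (trip [o 0/4] [o 1/4] [o 2/4]) = D -> wedge W (trip [o 0/4] [o 1/4] [o 3/4]) = C ->
   wedge W (trip [o 0/4] [o 2/4] [o 3/4]) = B -> wedge W (trip [o 1/4] [o 2/4] [o 3/4]) = A ->
   Om = wedge W.
  move=> W h1 h2 h3 h4; apply: boolp.funext => i.
  apply: (pform_eq hf (wedge_pform W)) => j hj.
  by apply: (incr3_4 (P := fun j => Om j = wedge W j)) hj; [rewrite h1 | rewrite h2 | rewrite h3 | rewrite h4].
case: (D =P 0) => hD; last first.
  have hD' : D != 0 by apply/eqP.
  exists (W3 0 1 2 3 (A / D) (- B / D) C D); split; first by w3free (Z3 0 1 2 D).
  by apply: key; w3val.
case: (C =P 0) => hC; last first.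
  have hC' : C != 0 by apply/eqP.
  exists (W3 0 1 3 2 (- A / C) (B / C) D C); split; first by w3free (Z3 0 1 3 C).
  by apply: key; w3val.
case: (B =P 0) => hB; last first.
  have hB' : B != 0 by apply/eqP.
  exists (W3 0 2 3 1 (A / B) (C / B) (- D) B); split; first by w3free (Z3 0 2 3 B).
  by apply: key; w3val.
case: (A =P 0) => hA; last first.
  have hA' : A != 0 by apply/eqP.
  exists (W3 1 2 3 0 (B / A) (- C / A) D A); split; first by w3free (Z3 1 2 3 A).
  by apply: key; w3val.
exfalso; case: hnz => i; apply.
apply: (pform_eq hf (f := Om) (h := fun _ => 0)) => //.
  by move=> s j; rewrite mulr0.
move=> j hj.
by apply: (incr3_4 (P := fun j => Om j = 0)) hj.
Qed.
End Three.

Section Top.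
Variable R : realType.

Lemma q2_N3 (Om : idx 3 3 -> R) : is_pform Om -> (exists i, Om i <> 0) ->
  exists W : 'M[R]_(3, 3), row_free W /\ Om = wedge W.
Proof.
move=> hf hnz.
set D := Om (trip [o 0/3] [o 1/3] [o 2/3]).
case: (D =P 0) => hD.
  exfalso; case: hnz => i; apply.
  apply: (pform_eq hf (f := Om) (h := fun _ => 0)) => //.
    by move=> s j; rewrite mulr0.
  by move=> j hj; apply: (incr3_3 (P := fun j => Om j = 0)) hj.
have hD' : D != 0 by apply/eqP.
pose W : 'M[R]_(3, 3) := \matrix_(k, l) (if val k == val l then (if val k == 0%N then D else 1) else 0).
exists W; split.
  have -> : row_free W = (\det W \is a GRing.unit) by rewrite row_free_unit unitmxE.
  have -> : \det W = D by rewrite det3 !mxE /=; ring.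
  by rewrite unitfE.
apply: boolp.funext => i; apply: (pform_eq hf (wedge_pform W)) => j hj.
apply: (incr3_3 (P := fun j => Om j = wedge W j)) hj.
by rewrite /wedge det3 !mxE !ffunE /=; rewrite -/D; ring.
Qed.

Definition quad N (x y z w : 'I_N) : idx N 4 :=
  [ffun k : 'I_4 => if val k == 0%N then x else if val k == 1%N then y
                    else if val k == 2%N then z else w].

Lemma incr4_4 (i : idx 4 4) : (forall k1 k2 : 'I_4, (k1 < k2)%N -> (i k1 < i k2)%N) ->
  i = [ffun k => k].
Proof.
move=> hi.
have h1 := hi [o 0/4] [o 1/4] isT; have h2 := hi [o 1/4] [o 2/4] isT; have h3 := hi [o 2/4] [o 3/4] isT.
have e : i = quad (i [o 0/4]) (i [o 1/4]) (i [o 2/4]) (i [o 3/4]).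
  apply/ffunP => k; rewrite ffunE.
  by case: k => [[|[|[|[|//]]]] Hk] /=; congr (i _); apply/val_inj.
rewrite e; move: (i [o 0/4]) (i [o 1/4]) (i [o 2/4]) (i [o 3/4]) h1 h2 h3 => x y z w.
case: x => [[|[|[|[|//]]]] Hx]; case: y => [[|[|[|[|//]]]] Hy];
case: z => [[|[|[|[|//]]]] Hz]; case: w => [[|[|[|[|//]]]] Hw] //= _ _ _.
apply/ffunP => k; rewrite !ffunE.
by case: k => [[|[|[|[|//]]]] Hk] /=; apply/val_inj.
Qed.

Lemma q3_N4 (Om : idx 4 4 -> R) : is_pform Om -> (exists i, Om i <> 0) ->
  exists W : 'M[R]_(4, 4), row_free W /\ Om = wedge W.
Proof.
move=> hf hnz.
set D := Om [ffun k => k].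
case: (D =P 0) => hD.
  exfalso; case: hnz => i; apply.
  apply: (pform_eq hf (f := Om) (h := fun _ => 0)) => //.
    by move=> s j; rewrite mulr0.
  by move=> j hj; rewrite (incr4_4 hj).
have hD' : D != 0 by apply/eqP.
pose W : 'M[R]_4 := diag_mx (\row_(k < 4) (if val k == 0%N then D else 1)).
have dW : \det W = D.
  by rewrite det_diag !big_ord_recl big_ord0 !mxE /=; ring.
exists W; split.
  by rewrite row_free_unit unitmxE dW unitfE.
apply: boolp.funext => i; apply: (pform_eq hf (wedge_pform W)) => j hj.
rewrite (incr4_4 hj) /wedge -/D.
have -> : \matrix_(k, l) W k ([ffun k0 => k0] l) = W.
  by apply/matrixP => k l; rewrite !mxE ffunE.
by rewrite dW.
Qed.
End Top.

Unset Implicit Arguments.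
Set Strict Implicit.

Theorem mainTheorem19 (R : realType) (N : nat) (g : 'M[R]_N) (q : nat)
    (Om : idx N q.+1 -> R) :
  (N <= 4)%N -> lorentzian g -> (q.+1 <= N)%N ->
  is_pform Om -> (exists i, Om i <> 0) ->
  exists (r : nat) (W : 'M[R]_(r.+1, N)),
    [/\ (r.+1 <= N)%N, row_free W & superenergy g Om = superenergy g (wedge W)].
Proof.
move=> hN hg hq hf hnz.
case: q Om hq hf hnz => [|q] Om hq hf hnz.
  have [W [HW E]] := q0_case hnz.
  by exists 0%N, W; split => //; rewrite E.
case: q Om hq hf hnz => [|q] Om hq hf hnz.
  have [W [HW E]] : exists W : 'M[R]_(2, N), row_free W /\ superenergy g Om = superenergy g (wedge W).
    have : (N == 2%N) || (N == 3%N) || (N == 4%N) by lia.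
    case/orP => [/orP[] /eqP ? | /eqP ?]; subst N.
    - exact: (q1_fact g hf hnz (pl2 (mat_anti hf))).
    - exact: (q1_fact g hf hnz (pl3 (mat_anti hf))).
    - exact: q1_N4.
  by exists 1%N, W; split.
case: q Om hq hf hnz => [|q] Om hq hf hnz.
  have [W [HW E]] : exists W : 'M[R]_(3, N), row_free W /\ Om = wedge W.
    have : (N == 3%N) || (N == 4%N) by lia.
    case/orP => /eqP ?; subst N.
    - exact: q2_N3.
    - exact: q2_N4.
  by exists 2%N, W; split => //; rewrite E.
case: q Om hq hf hnz => [|q] Om hq hf hnz.
  have ? : N = 4%N by lia.
  subst N.
  have [W [HW E]] := q3_N4 hf hnz.
  by exists 3%N, W; split => //; rewrite E.
exfalso; lia.
Qed.
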